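(* Let $n\ge 6$, $4\le p\le n-1$, and let $K_{n+1}=(V,E)$ be the complete graph on $V=\{0,\dots,n\}$. If $c\in\mathbb{R}^E$ and $c_0\in\mathbb{R}$ are such that $c^\top y=c_0$ for the incidence vector $y$ of every $[0,n]$-$p$-path, then there are $\alpha,\beta,\gamma\in\mathbb{R}$ with $c_{0i}=\alpha$ and $c_{in}=\beta$ for all $i\in\{1,\dots,n-1\}$, and $c_{ij}=\gamma$ for all distinct $i,j\in\{1,\dots,n-1\}$.
   Context: For an undirected graph $G=(V,E)$ with $V=\{0,\dots,n\}$, a $[0,n]$-$p$-path is a simple (undirected) path from $0$ to $n$ with exactly $p$ edges. $c_{ij}$ denotes the entry of $c$ for the edge $[i,j]$. *)

(* Defs.v *)
From mathcomp Require Import all_boot all_order all_algebra.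
Set Implicit Arguments. Unset Strict Implicit. Unset Printing Implicit Defensive.
Import GRing.Theory Num.Theory.
Local Open Scope ring_scope.

Definition is_edge (n : nat) (e : {set 'I_n.+1}) : bool := #|e| == 2.

Definition walk_edges (n : nat) (s : seq 'I_n.+1) : seq {set 'I_n.+1} :=
  match s with
  | [::] => [::]
  | x :: t => pairmap (fun a b => [set a; b]) x t
  end.

(* In K_{n+1} every pair of
   distinct vertices is adjacent, so distinctness of vertices suffices. *)
Definition is_0n_p_path (n p : nat) (s : seq 'I_n.+1) : bool :=
  [&& uniq s, size s == p.+1, head ord0 s == ord0 & last ord0 s == ord_max].

Definition incidence (R : numDomainType) (n : nat) (s : seq 'I_n.+1)
  (e : {set 'I_n.+1}) : R :=
  if e \in walk_edges s then 1 else 0.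

Definition dotE (R : numDomainType) (n : nat) (c y : {set 'I_n.+1} -> R) : R :=
  \sum_(e : {set 'I_n.+1} | is_edge e) c e * y e.

(* Main.v *)
Require Import Defs.
From mathcomp Require Import all_boot all_order all_algebra.
From mathcomp Require Import zify ring lra.
Import GRing.Theory Num.Theory.
Set Implicit Arguments. Unset Strict Implicit. Unset Printing Implicit Defensive.
Local Open Scope ring_scope.

Definition Wc (R : numDomainType) (n : nat) (c : {set 'I_n.+1} -> R)
  (s : seq 'I_n.+1) : R := \sum_(e <- walk_edges s) c e.
Arguments Wc : simpl never.

Lemma W_cons2 (R : numDomainType) n (c : {set 'I_n.+1} -> R) x y t :
  Wc c (x :: y :: t) = c [set x; y] + Wc c (y :: t).
Proof. by rewrite /Wc /= big_cons. Qed.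

Lemma W1 (R : numDomainType) n (c : {set 'I_n.+1} -> R) x : Wc c [:: x] = 0.
Proof. by rewrite /Wc /= big_nil. Qed.

Lemma Wcat (R : numDomainType) n (c : {set 'I_n.+1} -> R) s x y t :
  Wc c (x :: s ++ y :: t) = Wc c (x :: s) + c [set last x s; y] + Wc c (y :: t).
Proof.
elim: s x => [|z s IH] x; first by rewrite cat0s W_cons2 W1 add0r.
by rewrite cat_cons W_cons2 IH W_cons2 /= !addrA.
Qed.

Lemma pm_sub n (x : 'I_n.+1) t e z :
  e \in pairmap (fun a b => [set a; b]) x t -> z \in e -> z \in x :: t.
Proof.
elim: t x => [|y t IH] x //=.
rewrite in_cons => /orP[/eqP->|/IH H]; last first.
  by move=> /H Hz; rewrite in_cons Hz orbT.
by rewrite !inE => /orP[->|->]; rewrite ?orbT.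
Qed.

Lemma pm_uniq n (x : 'I_n.+1) t :
  uniq (x :: t) -> uniq (pairmap (fun a b => [set a; b]) x t).
Proof.
elim: t x => [|y t IH] x //= /andP[Hx /andP[Hy Hu]].
rewrite IH /= ?Hy ?Hu // andbT.
apply/negP => /(pm_sub (z:=x)); rewrite !inE eqxx => /(_ isT).
by move: Hx; rewrite in_cons => /negP.
Qed.

Lemma pm_edge n (x : 'I_n.+1) t e :
  uniq (x :: t) -> e \in pairmap (fun a b => [set a; b]) x t -> is_edge e.
Proof.
elim: t x => [|y t IH] x //= /andP[Hx /andP[Hy Hu]].
rewrite in_cons => /orP[/eqP->|]; last by apply: IH; rewrite /= Hy Hu.
rewrite /is_edge cards2.
by move: Hx; rewrite in_cons negb_or => /andP[->].
Qed.

Lemma dot_W (R : numDomainType) n (c : {set 'I_n.+1} -> R) s :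
  uniq s -> dotE c (incidence R s) = Wc c s.
Proof.
move=> Hu.
have [Wu We] : uniq (walk_edges s) /\ (forall e, e \in walk_edges s -> is_edge e).
  case: s Hu => [|x t] Hu //=; split; [exact: pm_uniq | move=> e; exact: pm_edge].
rewrite /dotE /Wc.
transitivity (\sum_(e | is_edge e && (e \in walk_edges s)) c e).
  rewrite [RHS]big_mkcondr /=; apply: eq_bigr => e _; rewrite /incidence.
  by case: ifP => _; rewrite ?mulr1 ?mulr0.
rewrite big_uniq //; apply: eq_bigl => e /=.
by apply/idP/idP => [/andP[]//|H]; rewrite H andbT We.
Qed.

Lemma exists_rest n (S : seq 'I_n.+1) k : (k + size S <= n - 1)%N ->
  exists r : seq 'I_n.+1, [/\ uniq r, size r = k &
    forall v, v \in r -> (0 < v < n)%N && (v \notin S)].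
Proof.
move=> Hk.
pose l0 := [seq inord i : 'I_n.+1 | i <- iota 1 (n - 1)].
have l0u : uniq l0.
  rewrite map_inj_in_uniq ?iota_uniq // => i j; rewrite !mem_iota => Hi Hj.
  move=> /(congr1 (@nat_of_ord _)); rewrite !inordK; lia.
have l0m : forall v, v \in l0 -> (0 < v < n)%N.
  by move=> v /mapP[i]; rewrite mem_iota => Hi ->; rewrite inordK; lia.
pose l := filter (predC (mem S)) l0.
have sl : (k <= size l)%N.
  have : (count (mem S) l0 <= size S)%N.
    rewrite -size_filter; apply: uniq_leq_size; first exact: filter_uniq.
    by move=> v; rewrite mem_filter => /andP[].
  have := count_predC (mem S) l0.
  rewrite size_map size_iota /l size_filter; lia.
exists (take k l); split.
- by apply: take_uniq; apply: filter_uniq.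
- exact: size_takel.
- move=> v /mem_take; rewrite mem_filter => /andP[H1 H2].
  by rewrite l0m.
Qed.

Lemma path_ok n p (mid : seq 'I_n.+1) : (0 < n)%N -> uniq mid ->
  (forall v, v \in mid -> (0 < v < n)%N) -> (size mid + 1)%N = p ->
  @is_0n_p_path n p (ord0 :: mid ++ [:: ord_max]).
Proof.
move=> n0 u im sz; apply/and4P; split.
- rewrite cats1 /= rcons_uniq mem_rcons in_cons u andbT negb_or.
  apply/andP; split; first (apply/andP; split).
  + by apply/eqP => /(congr1 val) /=; lia.
  + by apply/negP => /im.
  + by apply/negP => /im /andP[_]; rewrite ltnn.
- by rewrite /= size_cat /= sz.
- by [].
- by rewrite /= last_cat.
Qed.

Lemma notin_r n (r S : seq 'I_n.+1) v :
  (forall w, w \in r -> (0 < w < n)%N && (w \notin S)) -> v \in S -> v \notin r.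
Proof. by move=> Hr vS; apply/negP => /Hr /andP[_]; rewrite vS. Qed.

Lemma set2C (n : nat) (a b : 'I_n.+1) : [set a; b] = [set b; a].
Proof. by rewrite setUC. Qed.

Theorem lemmaU1 (R : realFieldType) (n p : nat) (c : {set 'I_n.+1} -> R) (c0 : R) :
  (6 <= n)%N -> (4 <= p)%N -> (p <= n - 1)%N ->
  (forall s : seq 'I_n.+1, @is_0n_p_path n p s ->
     dotE c (incidence R s) = c0) ->
  exists alpha beta gamma : R,
    (forall i : 'I_n.+1, (0 < i < n)%N ->
       c [set ord0; i] = alpha /\ c [set i; ord_max] = beta) /\
    (forall i j : 'I_n.+1, (0 < i < n)%N -> (0 < j < n)%N -> i != j ->
       c [set i; j] = gamma).
Proof.
move=> n6 p4 pn H.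
have n0 : (0 < n)%N by lia.
have HW : forall mid : seq 'I_n.+1, uniq mid -> (forall v, v \in mid -> (0 < v < n)%N) ->
    (size mid + 1)%N = p -> Wc c (ord0 :: mid ++ [:: ord_max]) = c0.
  move=> mid u im sz; have P := path_ok n0 u im sz.
  by rewrite -dot_W ?H //; case/and4P: P.
have R3 : forall x a y u : 'I_n.+1, (0 < x < n)%N -> (0 < a < n)%N ->
    (0 < y < n)%N -> (0 < u < n)%N ->
    x != a -> x != y -> x != u -> a != y -> a != u -> y != u ->
    c [set x; a] + c [set a; y] = c [set x; u] + c [set u; y].
  move=> x a y u Ix Ia Iy Iu xa xy xu ay au yu.
  have [r [ru rs rm]] := @exists_rest n [:: x; a; y; u] (p - 4) ltac:(simpl; lia).
  have xr : x \notin r by apply: (notin_r rm); rewrite !inE eqxx.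
  have ar : a \notin r by apply: (notin_r rm); rewrite !inE eqxx ?orbT.
  have yr : y \notin r by apply: (notin_r rm); rewrite !inE eqxx ?orbT.
  have ur : u \notin r by apply: (notin_r rm); rewrite !inE eqxx ?orbT.
  have im : forall b : 'I_n.+1, (0 < b < n)%N -> forall v : 'I_n.+1, v \in [:: x, b, y & r] -> (0 < v < n)%N.
    move=> b Ib v; rewrite !in_cons => /or4P[/eqP->|/eqP->|/eqP->|/rm/andP[]//] //.
  have E1 := HW [:: x, a, y & r] ltac:(by rewrite /= !in_cons !negb_or xa xy xr ay ar yr ru)
    (im a Ia) ltac:(by rewrite /= rs; lia).
  have E2 := HW [:: x, u, y & r] ltac:(by rewrite /= !in_cons !negb_or xu xy xr eq_sym yu ur yr ru)
    (im u Iu) ltac:(by rewrite /= rs; lia).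
  move: E1 E2; rewrite !cat_cons !W_cons2 => E1 E2; lra.
have D : forall x a b y : 'I_n.+1, (0 < x < n)%N -> (0 < a < n)%N ->
    (0 < b < n)%N -> (0 < y < n)%N ->
    x != a -> x != b -> x != y -> a != b -> a != y -> b != y ->
    c [set x; a] = c [set b; y].
  move=> x a b y Ix Ia Ib Iy xa xb xy ab ay bY.
  have E1 := R3 x a y b Ix Ia Iy Ib xa xy xb ay ab ltac:(by rewrite eq_sym).
  have E2 := R3 a x b y Ia Ix Ib Iy ltac:(by rewrite eq_sym) ab ay xb xy bY.
  move: E1 E2; rewrite (set2C a x) (set2C y b) => E1 E2; lra.
have Sh : forall a b d : 'I_n.+1, (0 < a < n)%N -> (0 < b < n)%N -> (0 < d < n)%N ->
    a != b -> a != d -> c [set a; b] = c [set a; d].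
  move=> a b d Ia Ib Id ab ad.
  have [bd|bd] := eqVneq b d; first by rewrite bd.
  have [r [ru rs rm]] := @exists_rest n [:: a; b; d] 2 ltac:(simpl; lia).
  case: r ru rs rm => [|e [|f []]] // ru _ rm.
  have [Ie /[!inE] /norP[ae /norP[be de]]] := andP (rm e ltac:(by rewrite !inE eqxx)).
  have [If /[!inE] /norP[af /norP[bf df]]] := andP (rm f ltac:(by rewrite !inE eqxx orbT)).
  have ef : e != f by move: ru; rewrite /= inE andbT.
  rewrite (D a b e f) ?(D a d e f) // eq_sym //.
have G : forall a b u v : 'I_n.+1, (0 < a < n)%N -> (0 < b < n)%N ->
    (0 < u < n)%N -> (0 < v < n)%N -> a != b -> u != v ->
    c [set a; b] = c [set u; v].
  move=> a b u v Ia Ib Iu Iv ab uv.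
  have [ad|ad] := eqVneq a v.
    subst v; rewrite (set2C u a); apply: Sh => //; by rewrite eq_sym.
  rewrite (Sh a b v) // (set2C a v) (set2C u v).
  by apply: Sh => //; rewrite eq_sym.
pose i1 : 'I_n.+1 := inord 1.
pose i2 : 'I_n.+1 := inord 2.
have Ii1 : (0 < i1 < n)%N by rewrite /i1 inordK; lia.
have Ii2 : (0 < i2 < n)%N by rewrite /i2 inordK; lia.
have i12 : i1 != i2 by apply/eqP => /(congr1 (@nat_of_ord _)); rewrite !inordK; lia.
exists (c [set ord0; i1]), (c [set i1; ord_max]), (c [set i1; i2]).
split; last by move=> i j Ii Ij ij; apply: G.
move=> i Ii.
have [->|ii1] := eqVneq i i1; first by [].
have [r [ru rs rm]] := @exists_rest n [:: i; i1] 1 ltac:(simpl; lia).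
case: r ru rs rm => [|w []] // _ _ rm.
have [Iw /[!inE] /norP[iw i1w]] := andP (rm w ltac:(by rewrite !inE eqxx)).
have wi : w != i by move: iw; rewrite eq_sym.
have wi1 : w != i1 by move: i1w; rewrite eq_sym.
have iw' : i != w by rewrite eq_sym.
have i1w' : i1 != w by rewrite eq_sym.
clear iw i1w.
have A : c [set ord0; i] + c [set i; w] = c [set ord0; i1] + c [set i1; w].
  have [r [ru rs rm']] := @exists_rest n [:: i; w; i1] (p - 3) ltac:(simpl; lia).
  have ir : i \notin r by apply: (notin_r rm'); rewrite !inE eqxx.
  have wr : w \notin r by apply: (notin_r rm'); rewrite !inE eqxx ?orbT.
  have i1r : i1 \notin r by apply: (notin_r rm'); rewrite !inE eqxx ?orbT.
  have im : forall b : 'I_n.+1, (0 < b < n)%N -> forall v : 'I_n.+1, v \in [:: b, w & r] -> (0 < v < n)%N.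
    move=> b Ib v; rewrite !in_cons => /or3P[/eqP->|/eqP->|/rm'/andP[]//] //.
  have E1 := HW [:: i, w & r] ltac:(by rewrite /= !in_cons !negb_or iw' ir wr ru)
    (im i Ii) ltac:(by rewrite /= rs; lia).
  have E2 := HW [:: i1, w & r] ltac:(by rewrite /= !in_cons !negb_or i1w' i1r wr ru)
    (im i1 Ii1) ltac:(by rewrite /= rs; lia).
  move: E1 E2; rewrite !cat_cons !W_cons2 => E1 E2; lra.
have B : c [set w; i] + c [set i; ord_max] = c [set w; i1] + c [set i1; ord_max].
  have [r [ru rs rm']] := @exists_rest n [:: i; w; i1] (p - 3) ltac:(simpl; lia).
  have ir : i \notin r by apply: (notin_r rm'); rewrite !inE eqxx.
  have wr : w \notin r by apply: (notin_r rm'); rewrite !inE eqxx ?orbT.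
  have i1r : i1 \notin r by apply: (notin_r rm'); rewrite !inE eqxx ?orbT.
  have im : forall b : 'I_n.+1, (0 < b < n)%N -> forall v : 'I_n.+1, v \in r ++ [:: w; b] -> (0 < v < n)%N.
    move=> b Ib v; rewrite mem_cat !in_cons => /or3P[/rm'/andP[]//|/eqP->|/orP[/eqP->|]] //.
  have E1 := HW (r ++ [:: w; i]) ltac:(by rewrite uniq_catC /= !in_cons !negb_or wi ir wr ru)
    (im i Ii) ltac:(by rewrite size_cat /= rs; lia).
  have E2 := HW (r ++ [:: w; i1]) ltac:(by rewrite uniq_catC /= !in_cons !negb_or wi1 i1r wr ru)
    (im i1 Ii1) ltac:(by rewrite size_cat /= rs; lia).
  move: E1 E2; rewrite -!catA !cat_cons cat0s !Wcat !W_cons2 !W1 => E1 E2; lra.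
have G1 : c [set i; w] = c [set i1; w] by apply: G => //; rewrite eq_sym.
have G2 : c [set w; i] = c [set w; i1] by apply: G => //; rewrite eq_sym.
split; lra.
Qed.
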